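(* Consider the LSTM system $x_{k+1}=f(x_k,u_k)$, $y_k=g(x_k)$ described in the context, augmented with an output disturbance $d\in\mathbb{R}^p$ (so the output is $g(x)+d$). If $x_{k+1}=f(x_k,u_k)$ is Incrementally Input-to-State Stable ($\delta$ISS) in the sets $\mathcal{X}$ and $\mathcal{U}$, then for every $u\in\mathcal{U}$ and every $y\in\mathbb{R}^p$ there exist unique values $x^*\in\mathcal{X}$, $d^*\in\mathbb{R}^p$ such that $x^*=f(x^*,u)$ and $y=g(x^* )+d^*$.
   Context: LSTM model: states $c,h\in\mathbb{R}^n$, input $u\in\mathbb{R}^m$, output $y\in\mathbb{R}^p$, $c_{k+1}=\sigma(W_fu_k+U_fh_k+b_f)\circ c_k+\sigma(W_iu_k+U_ih_k+b_i)\circ\tanh(W_cu_k+U_ch_k+b_c)$, $h_{k+1}=\sigma(W_ou_k+U_oh_k+b_o)\circ\tanh(c_{k+1})$, $y_k=W_yh_k+b_y$, where $\sigma$ is the logistic sigmoid, activations act elementwise, $\circ$ is the elementwise product; $x=[c^\top\ h^\top]^\top$, written $x_{k+1}=f(x_k,u_k)$, $y_k=g(x_k)$. $\delta$ISS: given $\mathcal{X}\subseteq\mathbb{R}^{2n}$ positively invariant (for every $u\in\mathcal{U}$, $x\in\mathcal{X}\Rightarrow f(x,u)\in\mathcal{X}$) and $\mathcal{U}\subseteq\mathbb{R}^m$, the system is $\delta$ISS in $\mathcal{X},\mathcal{U}$ if there exist $\beta\in\mathcal{KL}$, $\gamma\in\mathcal{K}_\infty$ such that for all $k\ge0$, all $x_{a,0},x_{b,0}\in\mathcal{X}$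 and all input sequences in $\mathcal{U}$, $\|x_{a,k}-x_{b,k}\|\le\beta(\|x_{a,0}-x_{b,0}\|,k)+\gamma(\max_{0\le h<k}\|u_{a,h}-u_{b,h}\|)$.
   Formalization: The positively invariant set $\mathcal{X}$ is in addition nonempty and closed in $\mathbb{R}^{2n}$. Each condition added here is assumed in the paper as well or is needed for the statement above to hold. *)

(* Defs.v *)
From HB Require Import structures.
From mathcomp Require Import all_boot all_order all_algebra.
From mathcomp Require Import all_classical all_reals all_analysis.
Set Implicit Arguments. Unset Strict Implicit. Unset Printing Implicit Defensive.
Import Order.TTheory GRing.Theory Num.Theory.
Import numFieldNormedType.Exports.
Local Open Scope classical_set_scope.
Local Open Scope ring_scope.

Section LSTM.
Variable R : realType.

Definition sigmoid (z : R) : R := 1 / (1 + expR (- z)).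
Definition tanhR (z : R) : R := (expR z - expR (- z)) / (expR z + expR (- z)).

Definition hprod (k : nat) (a b : 'cV[R]_k) : 'cV[R]_k :=
  \matrix_(i < k, j < 1) (a i j * b i j).

Definition enorm (k : nat) (v : 'cV[R]_k) : R :=
  Num.sqrt (\sum_(i < k) v i 0 ^+ 2).

Record lstm (n m p : nat) := Lstm {
  Wf : 'M[R]_(n, m); Uf : 'M[R]_n; bf : 'cV[R]_n;
  Wi : 'M[R]_(n, m); Ui : 'M[R]_n; bi : 'cV[R]_n;
  Wc : 'M[R]_(n, m); Uc : 'M[R]_n; bc : 'cV[R]_n;
  Wo : 'M[R]_(n, m); Uo : 'M[R]_n; bo : 'cV[R]_n;
  Wy : 'M[R]_(p, n); by_ : 'cV[R]_p }.

Variables n m p : nat.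
Variable L : lstm n m p.

Definition lstm_c (x : 'cV[R]_(n + n)) : 'cV[R]_n := usubmx x.
Definition lstm_h (x : 'cV[R]_(n + n)) : 'cV[R]_n := dsubmx x.

Definition lstm_f (x : 'cV[R]_(n + n)) (u : 'cV[R]_m) : 'cV[R]_(n + n) :=
  let c := lstm_c x in let h := lstm_h x in
  let c' := hprod (map_mx sigmoid (Wf L *m u + Uf L *m h + bf L)) c
          + hprod (map_mx sigmoid (Wi L *m u + Ui L *m h + bi L))
                  (map_mx tanhR (Wc L *m u + Uc L *m h + bc L)) in
  let h' := hprod (map_mx sigmoid (Wo L *m u + Uo L *m h + bo L))
                  (map_mx tanhR c') in
  col_mx c' h'.

Definition lstm_g (x : 'cV[R]_(n + n)) : 'cV[R]_p := Wy L *m lstm_h x + by_ L.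

Fixpoint lstm_traj (x0 : 'cV[R]_(n + n)) (u : nat -> 'cV[R]_m) (k : nat)
  : 'cV[R]_(n + n) :=
  match k with
  | 0 => x0
  | k'.+1 => lstm_f (lstm_traj x0 u k') (u k')
  end.

Definition pos_invariant (X : set 'cV[R]_(n + n)) (U : set 'cV[R]_m) : Prop :=
  forall x u, X x -> U u -> X (lstm_f x u).

End LSTM.

Section Comparison.
Variable R : realType.

Definition classK (a : R -> R) : Prop :=
  {within [set r : R | 0 <= r], continuous a} /\ a 0 = 0 /\
  (forall r s, 0 <= r -> r < s -> a r < a s).

Definition classKinf (a : R -> R) : Prop :=
  classK a /\ a r @[r --> +oo] --> +oo.

Definition classKL (b : R -> R -> R) : Prop :=
  (forall s, 0 <= s -> classK (fun r => b r s)) /\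
  (forall r, 0 <= r ->
     (forall s t, 0 <= s -> s <= t -> b r t <= b r s) /\
     b r s @[s --> +oo] --> 0).
End Comparison.

Definition deltaISS (R : realType) (n m p : nat) (L : lstm R n m p)
  (X : set 'cV[R]_(n + n)) (U : set 'cV[R]_m) : Prop :=
  exists (beta : R -> R -> R) (gamma : R -> R),
    classKL beta /\ classKinf gamma /\
    forall (k : nat) (xa0 xb0 : 'cV[R]_(n + n)) (ua ub : nat -> 'cV[R]_m),
      X xa0 -> X xb0 -> (forall h, U (ua h)) -> (forall h, U (ub h)) ->
      enorm (lstm_traj L xa0 ua k - lstm_traj L xb0 ub k)
        <= beta (enorm (xa0 - xb0)) k%:R
           + gamma (\big[Num.max/0]_(h < k) enorm (ua h - ub h)).

(* Main.v *)
Require Import Defs.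
From HB Require Import structures.
From mathcomp Require Import all_boot all_order all_algebra.
From mathcomp Require Import all_classical all_reals all_analysis.
From mathcomp Require Import lra ring.
Import Order.TTheory GRing.Theory Num.Theory.
Import numFieldNormedType.Exports.
Local Open Scope classical_set_scope.
Local Open Scope ring_scope.

Section Aux.
Variable R : realType.

Lemma sum_term_le (k : nat) (F : 'I_k -> R) (i : 'I_k) :
  (forall j, 0 <= F j) -> F i <= \sum_j F j.
Proof.
move=> F0; rewrite (bigD1 i) //= lerDl; exact: sumr_ge0.
Qed.

Lemma enorm_ge0 k (v : 'cV[R]_k) : 0 <= enorm v.
Proof. exact: sqrtr_ge0. Qed.

Lemma enorm0 k : enorm (0 : 'cV[R]_k) = 0.
Proof. by rewrite /enorm big1 ?sqrtr0 // => i _; rewrite mxE expr0n. Qed.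

Lemma coord_le_enorm k (v : 'cV[R]_k) i : `|v i 0| <= enorm v.
Proof.
rewrite /enorm -sqrtr_sqr ler_sqrt; last by apply: sumr_ge0 => j _; exact: sqr_ge0.
exact: (@sum_term_le k (fun j => v j 0 ^+ 2) i (fun j => sqr_ge0 (v j 0))).
Qed.

Lemma coord_le_norm k (v : 'cV[R]_k) i j : `|v i j| <= `|v|.
Proof.
rewrite [leRHS]/Num.Def.normr /= mx_normrE.
exact: (le_bigmax _ (fun ij : 'I_k * 'I_1 => `|v ij.1 ij.2|) (i, j)).
Qed.

Lemma norm_le_enorm k (v : 'cV[R]_k) : `|v| <= enorm v.
Proof.
rewrite [leLHS]/Num.Def.normr /= mx_normrE.
apply: bigmax_le => [|[i j] _]; first exact: enorm_ge0.
by rewrite /= (ord1 j); exact: coord_le_enorm.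
Qed.

Lemma enorm_le_coord k (v : 'cV[R]_k) b : 0 <= b ->
  (forall i, `|v i 0| <= b) -> enorm v <= k%:R * b.
Proof.
move=> b0 vb; rewrite /enorm -(@ger0_norm _ (k%:R * b)) ?mulr_ge0 //.
rewrite -sqrtr_sqr ler_sqrt ?sqr_ge0 //.
apply: (@le_trans _ _ (\sum_(i < k) b ^+ 2)).
  apply: ler_sum => i _; rewrite -real_normK ?num_real //.
  by rewrite lerXn2r ?nnegrE ?normr_ge0.
rewrite sumr_const card_ord exprMn -[b ^+ 2 *+ k]mulr_natl ler_wpM2r ?sqr_ge0 //.
case: k {v vb} => [|k]; first by rewrite expr0n.
by rewrite -natrX ler_nat expnS leq_pmulr.
Qed.

Lemma enorm_le_norm k (v : 'cV[R]_k) : enorm v <= k%:R * `|v|.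
Proof. apply: enorm_le_coord => // i; exact: coord_le_norm. Qed.

Lemma sigmoid_ge0 (z : R) : 0 <= sigmoid z.
Proof. by rewrite /sigmoid divr_ge0 // addr_ge0 // expR_ge0. Qed.

Lemma sigmoid_le (a b : R) : a <= b -> sigmoid a <= sigmoid b.
Proof.
move=> ab; rewrite /sigmoid !div1r lef_pV2 ?posrE ?ltr_wpDr ?expR_ge0 //.
by rewrite lerD2l ler_expR lerN2.
Qed.

Lemma sigmoid_lt1 (z : R) : sigmoid z < 1.
Proof.
by rewrite /sigmoid ltr_pdivrMr ?mul1r ?ltr_pwDr ?expR_gt0 // ltr_wpDr ?expR_ge0.
Qed.

Lemma tanh_le1 (z : R) : `|tanhR z| <= 1.
Proof.
have h1 := expR_gt0 z; have h2 := expR_gt0 (- z).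
rewrite /tanhR normrM normfV (@gtr0_norm _ (expR z + expR (- z))) ?addr_gt0 //.
rewrite ler_pdivrMr ?addr_gt0 // mul1r ler_norml; apply/andP; split; lra.
Qed.


Lemma mulr_ile1' (x y : R) : 0 <= x -> 0 <= y -> x <= 1 -> y <= 1 -> x * y <= 1.
Proof. exact: mulr_ile1. Qed.

Variables (n m p : nat) (L : lstm R n m p) (u : 'cV[R]_m).
Let cu := fun _ : nat => u.

Lemma traj_shift x j k :
  lstm_traj L (lstm_traj L x cu j) cu k = lstm_traj L x cu (j + k).
Proof. by elim: k => [|k IH] /=; rewrite ?addn0 // addnS /= IH. Qed.

Lemma h_bound x i : `|lstm_h (lstm_f L x u) i 0| <= 1.
Proof.
rewrite /lstm_h /lstm_f /= col_mxKd mxE normrM.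
rewrite mxE ger0_norm ?sigmoid_ge0 //.
apply: mulr_ile1 => //; [exact: sigmoid_ge0|exact: ltW (sigmoid_lt1 _)|].
rewrite mxE; exact: tanh_le1.
Qed.

Lemma arg_bound (W : 'M[R]_(n, m)) (Um : 'M[R]_n) (b : 'cV[R]_n) (h : 'cV[R]_n) :
  (forall j, `|h j 0| <= 1) -> forall i,
  `|(W *m u + Um *m h + b) i 0| <=
     \sum_i0 (`|(W *m u + b) i0 0| + \sum_j `|Um i0 j|).
Proof.
move=> hb i.
have -> : (W *m u + Um *m h + b) i 0 = (W *m u + b) i 0 + (Um *m h) i 0.
  by rewrite !mxE addrAC.
apply: le_trans (ler_normD _ _) _.
apply: le_trans; last first.
  apply: (@sum_term_le _ (fun i0 => `|(W *m u + b) i0 0| + \sum_j `|Um i0 j|) i).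
  by move=> j; rewrite addr_ge0 // sumr_ge0.
rewrite lerD2l mxE; apply: le_trans (ler_norm_sum _ _ _) _.
apply: ler_sum => j _; rewrite normrM; apply: ler_piMr => //.
Qed.

Definition Kf := \sum_i0 (`|(Wf L *m u + bf L) i0 0| + \sum_j `|Uf L i0 j|).
Definition lam := sigmoid Kf.

Lemma c_step x : (forall j, `|lstm_h x j 0| <= 1) ->
  forall i, `|lstm_c (lstm_f L x u) i 0| <= lam * `|lstm_c x i 0| + 1.
Proof.
move=> hb i.
have ab := arg_bound (Wf L) (Uf L) (bf L) (lstm_h x) hb i.
pose a := (Wf L *m u + Uf L *m lstm_h x + bf L).
pose b := (Wi L *m u + Ui L *m lstm_h x + bi L).
pose e := (Wc L *m u + Uc L *m lstm_h x + bc L).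
have -> : lstm_c (lstm_f L x u) i 0 =
    sigmoid (a i 0) * lstm_c x i 0 + sigmoid (b i 0) * tanhR (e i 0).
  by rewrite /lstm_c /lstm_f /= col_mxKu !mxE.
apply: le_trans (ler_normD _ _) _; rewrite (normrM (sigmoid (a i 0))) (normrM (sigmoid (b i 0))).
rewrite !(@ger0_norm _ (sigmoid _)) ?sigmoid_ge0 //.
apply: lerD.
  rewrite ler_wpM2r //.
  by apply: sigmoid_le; move: ab; rewrite ler_norml => /andP[].
apply: mulr_ile1; rewrite ?normr_ge0 ?tanh_le1 ?sigmoid_ge0 //.
exact: ltW (sigmoid_lt1 _).
Qed.


Lemma lam_ge0 : 0 <= lam. Proof. exact: sigmoid_ge0. Qed.
Lemma lam_lt1 : lam < 1. Proof. exact: sigmoid_lt1. Qed.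

Definition Bb (x0 : 'cV[R]_(n + n)) :=
  \sum_i `|lstm_c (lstm_f L x0 u) i 0| + (1 - lam)^-1.

Lemma Bb_ge1 x0 : (1 - lam)^-1 <= Bb x0.
Proof. by rewrite /Bb lerDr sumr_ge0. Qed.

Lemma Pstep B x : (1 - lam)^-1 <= B ->
  (forall i, `|lstm_c x i 0| <= B) -> (forall i, `|lstm_h x i 0| <= 1) ->
  (forall i, `|lstm_c (lstm_f L x u) i 0| <= B).
Proof.
move=> hB hc hh i.
apply: le_trans (c_step x hh i) _.
have l0 := lam_ge0; have l1 := lam_lt1.
have q0 : 0 < 1 - lam by rewrite subr_gt0.
have h1 : 1 <= (1 - lam) * B.
  apply: le_trans (ler_wpM2l (ltW q0) hB); by rewrite mulfV ?gt_eqF.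
have h2 : lam * `|lstm_c x i 0| <= lam * B by rewrite ler_wpM2l.
nra.
Qed.

Lemma P_traj x0 k : (0 < k)%N ->
  (forall i, `|lstm_c (lstm_traj L x0 cu k) i 0| <= Bb x0) /\
  (forall i, `|lstm_h (lstm_traj L x0 cu k) i 0| <= 1).
Proof.
elim: k => [//|[|k] IH _] /=.
  split=> i; last exact: h_bound.
  rewrite /Bb -[X in X <= _]addr0 lerD //; last by rewrite invr_ge0 subr_ge0 ltW ?lam_lt1.
  exact: (@sum_term_le _ (fun i => `|lstm_c (lstm_f L x0 u) i 0|) i).
have [hc hh] := IH isT.
split=> i; last exact: h_bound.
exact: Pstep (Bb_ge1 x0) hc hh i.
Qed.

Lemma coord_from_parts (x : 'cV[R]_(n + n)) b :
  (forall i, `|lstm_c x i 0| <= b) -> (forall i, `|lstm_h x i 0| <= b) ->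
  forall i, `|x i 0| <= b.
Proof.
move=> hc hh i; case: (splitP i) => j hj.
  have -> : i = lshift n j by apply/val_inj.
  by have := hc j; rewrite /lstm_c mxE.
have -> : i = rshift n j by apply/val_inj.
by have := hh j; rewrite /lstm_h mxE.
Qed.

Definition Mb (x0 : 'cV[R]_(n + n)) :=
  (n + n)%:R * (Bb x0 + 1 + \sum_i `|x0 i 0|).

Lemma Bb_ge0 x0 : 0 <= Bb x0.
Proof.
apply: le_trans (Bb_ge1 x0); by rewrite invr_ge0 subr_ge0 ltW ?lam_lt1.
Qed.

Lemma traj_bound x0 j : enorm (lstm_traj L x0 cu j - x0) <= Mb x0.
Proof.
have b0 : 0 <= Bb x0 + 1 + \sum_i `|x0 i 0|.
  have := Bb_ge0 x0; have : 0 <= \sum_i `|x0 i 0| by apply: sumr_ge0.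
  lra.
case: j => [|j].
  by rewrite /= subrr enorm0 /Mb mulr_ge0.
apply: enorm_le_coord => // i.
have [hc hh] := @P_traj x0 j.+1 isT.
have hx : `|lstm_traj L x0 cu j.+1 i 0| <= Bb x0 + 1.
  apply: coord_from_parts => k.
    by apply: le_trans (hc k) _; rewrite lerDl.
  by apply: le_trans (hh k) _; rewrite lerDr Bb_ge0.
have -> : (lstm_traj L x0 cu j.+1 - x0) i 0 = lstm_traj L x0 cu j.+1 i 0 - x0 i 0.
  by rewrite mxE [(- x0) _ _]mxE.
apply: le_trans (ler_normB _ _) _.
apply: lerD => //.
exact: (@sum_term_le _ (fun i => `|x0 i 0|) i).
Qed.


Lemma eps0 (a : R) : 0 <= a -> (forall e, 0 < e -> a <= e) -> a = 0.
Proof.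
move=> a0 h; have [agt|ale] := ltrP 0 a.
  have := h (a / 2) (divr_gt0 agt (ltr0Sn _ 1)); lra.
lra.
Qed.

Lemma Mb_ge0 x0 : 0 <= Mb x0.
Proof.
rewrite /Mb mulr_ge0 //.
have := Bb_ge0 x0; have : 0 <= \sum_i `|x0 i 0| by apply: sumr_ge0.
lra.
Qed.

Lemma main_sec (X : set 'cV[R]_(n + n)) (U : set 'cV[R]_m) :
  X !=set0 -> closed X ->
  pos_invariant L X U ->
  deltaISS L X U ->
  forall (y : 'cV[R]_p), U u ->
    exists (xs : 'cV[R]_(n + n)) (ds : 'cV[R]_p),
      [/\ X xs, xs = lstm_f L xs u & y = lstm_g L xs + ds] /\
      (forall (x' : 'cV[R]_(n + n)) (d' : 'cV[R]_p),
         X x' -> x' = lstm_f L x' u -> y = lstm_g L x' + d' ->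
         x' = xs /\ d' = ds).
Proof.
move=> [x0 Xx0] clX inv [beta [gamma [hb [hg hd]]]] y Uu.
move: hb => [bK bL]; move: hg => [[_ [g0 _]] _].
have trX : forall x, X x -> forall k, X (lstm_traj L x cu k).
  by move=> x Xx; elim=> [|k IH] //=; apply: inv.
have bigmax0 : forall k, \big[Num.max/0]_(h < k) enorm (cu h - cu h) = 0.
  move=> k; elim/big_ind: _ => //; first by move=> a b -> ->; rewrite maxxx.
  by move=> i _; rewrite subrr enorm0.
have dISS : forall k xa xb, X xa -> X xb ->
    enorm (lstm_traj L xa cu k - lstm_traj L xb cu k) <= beta (enorm (xa - xb)) k%:R.
  move=> k xa xb Xa Xb.
  by have := hd k xa xb cu cu Xa Xb (fun _ => Uu) (fun _ => Uu); rewrite bigmax0 g0 addr0.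
have bmono : forall r M s, 0 <= r -> r <= M -> 0 <= s -> beta r s <= beta M s.
  move=> r M s r0 rM s0; have [_ [_ inc]] := bK s s0.
  case: (ltrP r M) => [/(inc _ _ r0)/ltW//|Mr].
  by have -> : r = M by apply/le_anti; rewrite rM Mr.
have b_to0 : forall r, 0 <= r -> (fun k : nat => beta r k%:R) @ \oo --> 0.
  by move=> r r0; exact: (cvg_comp _ _ cvgr_idn (proj2 (bL r r0))).
pose traj k := lstm_traj L x0 cu k.
have cvT : cvg (traj @ \oo).
  apply/cauchy_cvgP/cauchy_exP => e e0.
  have := b_to0 (Mb x0) (Mb_ge0 x0); move/cvgrPdist_lt/(_ e e0) => [K _ HK].
  exists (traj K); exists K => // k /= Kk.
  rewrite -ball_normE /ball_ /= distrC.
  have -> : traj k = lstm_traj L (traj (k - K)%N) cu K by rewrite /traj traj_shift subnK.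
  apply: le_lt_trans (norm_le_enorm _ _) _.
  apply: le_lt_trans (dISS K _ _ (trX _ Xx0 _) Xx0) _.
  apply: le_lt_trans (bmono _ _ _ (enorm_ge0 _ _) (traj_bound _ _) (ler0n _ _)) _.
  have := HK K (leqnn K); rewrite /= sub0r normrN; exact: le_lt_trans (ler_norm _).
set xs := lim (traj @ \oo).
have Xs : X xs.
  apply: (closed_cvg _ clX _ _ cvT); exists 0%N => // k _; exact: trX.
have fixP : forall x, lstm_f L x u = x -> forall k, lstm_traj L x cu k = x.
  move=> x fx; elim=> [|k IH]; first by [].
  transitivity (lstm_f L (lstm_traj L x cu k) u); first by [].
  by rewrite IH fx.
have bdel : forall e, 0 < e -> exists2 d, 0 < d & beta d 1%:R < e.
  move=> e e0; have [bc [b0 _]] := bK 1%:R (ler0n _ 1).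
  have := (proj1 (subspace_continuousP _ _) bc 0 (lexx 0)).
  rewrite /from_subspace b0 => /cvgrPdist_lt/(_ e e0) /nbhs_ballP [r r0 Hr].
  exists (r / 2); first by rewrite divr_gt0.
  have hr2 : ball (0 : R) r (r / 2).
    rewrite -ball_normE /ball_ /= sub0r normrN gtr0_norm ?divr_gt0 //; rewrite ltr_pdivrMr // mulr_natr mulr2n ltrDl; exact: r0.
  have := Hr _ hr2 (ltW (divr_gt0 r0 (ltr0Sn _ 1))).
  by rewrite sub0r normrN; apply: le_lt_trans (ler_norm _).
have fixs : lstm_f L xs u = xs.
  apply/eqP; rewrite -subr_eq0 -normr_eq0; apply/eqP.
  apply: eps0 => // e e0.
  have e2 : 0 < e / 2 by rewrite divr_gt0.
  have [d d0 hd1] := bdel _ e2.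
  pose N := (n + n)%:R + 1 : R.
  have N0 : 0 < N by rewrite /N ltr_wpDl.
  have [K1 _ HK1] := (proj1 (cvgrPdist_le _ _) cvT (d / N) (divr_gt0 d0 N0)).
  have [K2 _ HK2] := (proj1 (cvgrPdist_le _ _) cvT (e / 2) e2).
  pose k := maxn K1 K2.
  have k1 : `|xs - traj k| <= d / N by apply: HK1; rewrite /= leq_maxl.
  have k2 : `|xs - traj k.+1| <= e / 2.
    by apply: HK2; rewrite /= (leq_trans (leq_maxr K1 K2)) // /k leqnSn.
  have en : enorm (xs - traj k) <= d.
    apply: le_trans (enorm_le_norm _ _) _.
    apply: le_trans (_ : N * `|xs - traj k| <= d).
      by rewrite ler_wpM2r // /N lerDl.
    apply: le_trans (ler_wpM2l (ltW N0) k1) _; rewrite mulrC divfK ?gt_eqF //.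
  apply: le_trans (ler_distD (traj k.+1) _ _) _.
  have -> : e = e / 2 + e / 2 by field.
  apply: lerD; last by rewrite distrC.
  have h1 : enorm (lstm_f L xs u - traj k.+1) <= beta (enorm (xs - traj k)) 1%:R.
    exact: (dISS 1%N xs (traj k) Xs (trX _ Xx0 k)).
  apply: le_trans (norm_le_enorm _ _) _.
  apply: (le_trans h1); apply: ltW; apply: le_lt_trans hd1.
  exact: bmono (enorm_ge0 _ _) en (ler0n _ 1).
exists xs, (y - lstm_g L xs); split.
  by split => //; rewrite addrC subrK.
move=> x' d' Xx' fx' hy.
have ex : x' = xs.
  have c0 : enorm (x' - xs) = 0.
    apply: eps0; first exact: enorm_ge0.
    move=> e e0; have := b_to0 _ (enorm_ge0 _ (x' - xs)).
    move/cvgrPdist_lt/(_ e e0) => [K _ HK].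
    have := HK K (leqnn K); rewrite /= sub0r normrN => hb.
    have := dISS K x' xs Xx' Xs; rewrite (fixP _ (esym fx')) (fixP _ fixs) => h.
    apply/ltW; apply: (le_lt_trans h); exact: le_lt_trans (ler_norm _) hb.
  apply/eqP; rewrite -subr_eq0 -normr_eq0 eq_le normr_ge0 andbT -c0.
  exact: norm_le_enorm.
split => //; rewrite hy ex [lstm_g L xs + d']addrC addrK //.
Qed.

End Aux.

Theorem lemma2 (R : realType) (n m p : nat) (L : lstm R n m p)
  (X : set 'cV[R]_(n + n)) (U : set 'cV[R]_m) :
  X !=set0 -> closed X ->
  pos_invariant L X U ->
  deltaISS L X U ->
  forall (u : 'cV[R]_m) (y : 'cV[R]_p), U u ->
    exists (xs : 'cV[R]_(n + n)) (ds : 'cV[R]_p),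
      [/\ X xs, xs = lstm_f L xs u & y = lstm_g L xs + ds] /\
      (forall (x' : 'cV[R]_(n + n)) (d' : 'cV[R]_p),
         X x' -> x' = lstm_f L x' u -> y = lstm_g L x' + d' ->
         x' = xs /\ d' = ds).
Proof.
move=> hX cX inv hd u y Uu.
exact: (@main_sec R n m p L u X U hX cX inv hd y Uu).
Qed.
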